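(* Let $T\ge 1$ and $d$ be integers with $d>2T+1$, and let $n=T+1$. For every deterministic algorithm that interacts for $T$ rounds with a one-sided oracle and then outputs a vector $\mathbf{w}_{T+1}\in\mathbb{R}^d$, there exists a matrix $A\in\mathbb{R}^{(T+1)\times d}$ such that \[ \max_{l\in[T+1]}\|A_l\|_2=1\qquad\text{and}\qquad \max_{\mathbf{w}\in\mathbb{R}^d:\|\mathbf{w}\|_2\le 1}\ \min_{\mathbf{p}\in\Delta^{n-1}}\mathbf{p}^\top A\mathbf{w}\ \ge\ \frac{1}{\sqrt{T+1}}, \] yet the output of the algorithm after $T$ rounds of interaction with $\mathcal{O}_1^A$ satisfies $\min_{\mathbf{p}\in\Delta^{n-1}}\mathbf{p}^\top A\mathbf{w}_{T+1}\le 0$.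
   Context: $\Delta^{n-1}=\{\mathbf{p}\in\mathbb{R}^n:\ p_i\ge 0\ \forall i,\ \sum_i p_i=1\}$ is the probability simplex; $A_l$ denotes the $l$-th row of $A$; $[n]=\{1,\dots,n\}$. The one-sided oracle $\mathcal{O}_1^A$: given a query $(l,\mathbf{w})\in[n]\times\mathbb{R}^d$, it returns $A\mathbf{w}$ and the row $A_l$. A deterministic algorithm interacting with the oracle for $T$ rounds chooses, at each round $t=1,\dots,T$, a query $(l_t,\mathbf{w}_t)$ as a deterministic function of the oracle responses received in rounds $1,\dots,t-1$, and after round $T$ outputs $\mathbf{w}_{T+1}\in\mathbb{R}^d$ as a deterministic function of all $T$ responses. Queries are not restricted to the unit ball. *)

(* Defs.v *)
From HB Require Import structures.
From mathcomp Require Import all_boot all_order all_algebra.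
From mathcomp Require Import reals.
Set Implicit Arguments. Unset Strict Implicit. Unset Printing Implicit Defensive.
Import Order.TTheory GRing.Theory Num.Theory.
Local Open Scope ring_scope.

Section Defs.
Variable R : realType.

Definition rnorm2 d (v : 'rV[R]_d) : R := Num.sqrt (\sum_(j < d) v 0 j ^+ 2).
Definition cnorm2 d (v : 'cV[R]_d) : R := Num.sqrt (\sum_(j < d) v j 0 ^+ 2).

Definition max_row_norm n d (A : 'M[R]_(n, d)) : R :=
  \big[Num.max/0]_(l < n) rnorm2 (row l A).

Definition in_simplex n (p : 'cV[R]_n) : Prop :=
  (forall i, 0 <= p i 0) /\ \sum_(i < n) p i 0 = 1.

Definition bilin n d (p : 'cV[R]_n) (A : 'M[R]_(n, d)) (w : 'cV[R]_d) : R :=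
  (p^T *m A *m w) 0 0.

Definition response n d := ('cV[R]_n * 'rV[R]_d)%type.
Definition query n d := ('I_n * 'cV[R]_d)%type.

Definition oracle1 n d (A : 'M[R]_(n, d)) (q : query n d) : response n d :=
  (A *m q.2, row q.1 A).

(* A deterministic algorithm: the query of round t is a function of the
   list of responses of rounds 1..t-1; the output is a function of the
   list of all T responses. *)
Record algorithm n d := Algorithm {
  alg_query : seq (response n d) -> query n d;
  alg_output : seq (response n d) -> 'cV[R]_d }.

Fixpoint history n d (alg : algorithm n d) (A : 'M[R]_(n, d)) (k : nat)
  : seq (response n d) :=
  match k with
  | 0 => [::]
  | k'.+1 => let h := history alg A k' in
             rcons h (oracle1 A (alg_query alg h))
  end.

Definition run_output n d (alg : algorithm n d) (A : 'M[R]_(n, d)) (T : nat)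
  : 'cV[R]_d := alg_output alg (history alg A T).

End Defs.

(* Main.v *)
Require Import Defs.
From HB Require Import structures.
From mathcomp Require Import all_boot all_order all_algebra.
From mathcomp Require Import reals.
From Stdlib Require Import ClassicalEpsilon.
From mathcomp Require Import zify ring lra.
Import Order.TTheory GRing.Theory Num.Theory.
Local Open Scope ring_scope.
Set Implicit Arguments. Unset Strict Implicit. Unset Printing Implicit Defensive.

Section Main.
Variable R : realType.
Variables T d : nat.
Hypothesis hd : (2 * T + 1 < d)%N.
Local Notation n := T.+1.

Lemma ker_exists m (C : 'M[R]_(m, d)) : (m < d)%N ->
  exists v : 'rV[R]_d, v != 0 /\ C *m v^T = 0.
Proof.
move=> hm.
have : kermx C^T != 0.
  rewrite -mxrank_eq0 mxrank_ker mxrank_tr.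
  have := rank_leq_row C. lia.
case/rowV0Pn => v /sub_kermxP hv nz; exists v; split => //.
by rewrite -[C]trmxK -trmx_mul hv trmx0.
Qed.

Definition okv (ws : seq 'cV[R]_d) (M : 'M[R]_(n,d)) (v : 'rV[R]_d) : Prop :=
  v *m v^T = 1%:M /\ (forall w, w \in ws -> v *m w = 0) /\ M *m v^T = 0.

Definition fresh ws M : 'rV[R]_d := epsilon (inhabits 0) (okv ws M).

Lemma vvT_sum (v : 'rV[R]_d) : (v *m v^T) 0 0 = \sum_j v 0 j ^+ 2.
Proof. by rewrite mxE; apply: eq_bigr => j _; rewrite mxE expr2. Qed.

Lemma fresh_ok ws M : (size ws <= T)%N -> okv ws M (fresh ws M).
Proof.
move=> hs; apply: epsilon_spec.
pose W : 'M[R]_(size ws, d) := \matrix_(i, j) (nth 0 ws i) j 0.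
have [v [nz hv]] := @ker_exists _ (col_mx W M) ltac:(lia).
rewrite mul_col_mx in hv; move/eqP: hv; rewrite col_mx_eq0 => /andP[/eqP hW /eqP hM].
set s := (v *m v^T) 0 0.
have s_gt0 : 0 < s.
  rewrite /s vvT_sum.
  have [j hj] : exists j, v 0 j != 0.
    apply/existsP; apply: contraR nz; rewrite negb_exists => /forallP h.
    by apply/eqP/rowP => j; rewrite mxE; apply/eqP; have := h j; rewrite negbK.
  rewrite (bigD1 j) //= ltr_pwDl //; last by apply: sumr_ge0 => i _; exact: sqr_ge0.
  by rewrite exprn_even_gt0 //.
have sq := sqrtr_gt0 s; rewrite s_gt0 in sq.
exists ((Num.sqrt s)^-1 *: v); split; last split.
- apply/matrixP => i j; rewrite !ord1 linearZ /= -scalemxAl -scalemxAr !mxE.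
  have -> : \sum_j v 0 j * v^T j 0 = s by rewrite /s mxE.
  by rewrite mulrA -invfM -expr2 sqr_sqrtr ?ltW // eqxx mulVf // (gt_eqF s_gt0).
- move=> w /(nthP 0) [i hi <-].
  rewrite -scalemxAl; apply/matrixP => a b; rewrite !ord1 !mxE.
  have := congr1 (fun X : 'M[R]_(size ws, 1) => X (Ordinal hi) 0) hW; rewrite !mxE => e.
  rewrite (eq_bigr (fun j => W (Ordinal hi) j * v^T j 0)) ?e ?mulr0 // => j _.
  by rewrite !mxE mulrC.
- by rewrite linearZ /= -scalemxAr hM scaler0.
Qed.

Lemma okv_nz ws M f : okv ws M f -> f != 0.
Proof.
move=> [h _]; apply/eqP => f0; move: h; rewrite f0 mul0mx => /matrixP/(_ 0 0).
by rewrite !mxE /= => /eqP; rewrite eq_sym oner_eq0.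
Qed.

Definition setrow (M : 'M[R]_(n,d)) (l : 'I_n) (v : 'rV[R]_d) : 'M[R]_(n,d) :=
  \matrix_(i, j) if i == l then v 0 j else M i j.

Lemma row_setrow M l v i : row i (setrow M l v) = if i == l then v else row i M.
Proof. by apply/rowP => j; rewrite !mxE; case: (i == l); rewrite ?mxE. Qed.

Definition fillS (s : R) ws M l :=
  if row l M == 0 then setrow M l (s *: fresh ws M) else M.

Lemma row_fillS s ws M l i : row i (fillS s ws M l) =
  if (i == l) && (row l M == 0) then s *: fresh ws M else row i M.
Proof.
rewrite /fillS; case: (row l M == 0); rewrite ?andbT ?andbF //.
by rewrite row_setrow.
Qed.

Lemma fill_keep s ws M l i : row i M != 0 -> row i (fillS s ws M l) = row i M.
Proof.
move=> nz; rewrite row_fillS; case: eqP => //= e; subst.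
by rewrite (negbTE nz).
Qed.

Lemma fill_nz s ws M l i : (size ws <= T)%N -> s != 0 ->
  (i == l) || (row i M != 0) -> row i (fillS s ws M l) != 0.
Proof.
move=> hs s0 /orP[/eqP ->|nz]; last by rewrite fill_keep.
rewrite row_fillS eqxx /=; case: (row l M =P 0) => [_|/eqP nz]; last by [].
by rewrite scaler_eq0 negb_or s0 (okv_nz (fresh_ok M hs)).
Qed.

Definition orth (M : 'M[R]_(n,d)) :=
  (forall i j, i != j -> row i M *m (row j M)^T = 0) /\
  (forall i, row i M != 0 -> row i M *m (row i M)^T = 1%:M).

Lemma orth_fill s ws M l : s ^+ 2 = 1 -> (size ws <= T)%N -> orth M ->
  orth (fillS s ws M l).
Proof.
move=> s2 hs [o1 o2]; have [f1 [_ f3]] := fresh_ok M hs.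
set f := fresh ws M in f1 f3.
have fr j : row j M *m f^T = 0 by rewrite -row_mul f3 row0.
have fl j : f *m (row j M)^T = 0 by rewrite -[f]trmxK -trmx_mul fr trmx0.
split.
- move=> i j ij; rewrite !row_fillS.
  case Ei: ((i == l) && (row l M == 0)); case Ej: ((j == l) && (row l M == 0)).
  + by move: Ei Ej ij => /andP[/eqP -> _] /andP[/eqP -> _]; rewrite eqxx.
  + by rewrite -scalemxAl fl scaler0.
  + by rewrite linearZ /= -scalemxAr fr scaler0.
  + exact: o1.
- move=> i; rewrite !row_fillS; case: ((i == l) && (row l M == 0)); last exact: o2.
  by rewrite linearZ /= -scalemxAr -scalemxAl f1 scalerA -expr2 s2 scale1r.
Qed.

Lemma orth0 : orth 0.
Proof. by split => [i j _|i]; rewrite row0 ?eqxx // mul0mx. Qed.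

Definition Good (ws : seq 'cV[R]_d) (M A : 'M[R]_(n,d)) :=
  forall i, (row i M != 0 -> row i A = row i M) /\
            (row i M = 0 -> forall w, w \in ws -> row i A *m w = 0).

Lemma good_fill s ws ws' M l A : {subset ws <= ws'} -> (size ws' <= T)%N ->
  Good ws' (fillS s ws' M l) A -> Good ws M A.
Proof.
move=> sub hs hG i; have [h1 h2] := hG i; rewrite row_fillS in h1 h2.
have [_ [f2 _]] := fresh_ok M hs.
case: (row i M =P 0) => [z|nz].
- split => [/eqP//|_ w win].
  case E: ((i == l) && (row l M == 0)); rewrite E in h1 h2.
  + case: (s *: fresh ws' M =P 0) => [e|/eqP ne].
      by apply: h2 => //; apply: sub.
    by rewrite h1 // -scalemxAl f2 ?scaler0 //; apply: sub.
  + by apply: h2 => //; apply: sub.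
- split => // _.
  case E: ((i == l) && (row l M == 0)); rewrite E in h1 h2.
  + move: E nz => /andP[/eqP e /eqP z] nz; subst; exfalso; exact: nz.
  + by apply: h1; apply/eqP.
Qed.

Lemma good_refl ws A : Good ws A A.
Proof. by move=> i; split => // -> w _; rewrite mul0mx. Qed.

Definition fillall ws G (L : seq 'I_n) := foldl (fun M l => fillS 1 ws M l) G L.

Lemma good_fold ws G L A : (size ws <= T)%N ->
  Good ws (fillall ws G L) A -> Good ws G A.
Proof.
move=> hs; elim: L G => [//|a L IH] G /= /IH.
exact: good_fill.
Qed.

Lemma orth_fold ws G L : (size ws <= T)%N -> orth G -> orth (fillall ws G L).
Proof.
move=> hs; elim: L G => [//|a L IH] G oG /=; apply: IH.
by apply: orth_fill; rewrite ?expr1n.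
Qed.

Lemma fold_keep ws G L i : row i G != 0 -> row i (fillall ws G L) = row i G.
Proof.
elim: L G => [//|a L IH] G nz /=.
have nz' : row i (fillS 1 ws G a) != 0 by rewrite fill_keep.
by rewrite IH // fill_keep.
Qed.

Lemma fold_nz ws G L i : (size ws <= T)%N -> (i \in L) || (row i G != 0) ->
  row i (fillall ws G L) != 0.
Proof.
move=> hs; elim: L G => [|a L IH] G; first by rewrite in_nil.
rewrite in_cons => h /=; apply: IH.
case: (i \in L) h; rewrite ?orbT // orbF => h.
by rewrite fill_nz ?oner_eq0.
Qed.


Variable alg : algorithm R n d.

Definition state := (seq (response R n d) * 'M[R]_(n,d) * seq (query R n d))%type.

Definition step (st : state) : state :=
  let: (h, M, qs) := st in
  let q := alg_query alg h in
  let qs' := rcons qs q in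
  let M' := fillS 1 (map snd qs') M q.1 in
  (rcons h (oracle1 M' q), M', qs').

Fixpoint sim k : state :=
  match k with 0 => ([::], 0, [::]) | k'.+1 => step (sim k') end.

Definition simh k := (sim k).1.1.
Definition simM k := (sim k).1.2.
Definition simq k := (sim k).2.

Lemma simq_S k : simq k.+1 = rcons (simq k) (alg_query alg (simh k)).
Proof. by rewrite /simq /simh /=; case: (sim k) => [[h M] qs]. Qed.

Lemma simM_S k : simM k.+1 =
  fillS 1 (map snd (simq k.+1)) (simM k) (alg_query alg (simh k)).1.
Proof. by rewrite simq_S /simq /simM /simh /=; case: (sim k) => [[h M] qs]. Qed.

Lemma simh_S k : simh k.+1 =
  rcons (simh k) (oracle1 (simM k.+1) (alg_query alg (simh k))).
Proof. by rewrite simM_S simq_S /simq /simM /simh /=; case: (sim k) => [[h M] qs]. Qed.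

Lemma size_simq k : size (simq k) = k.
Proof. by elim: k => [//|k IH]; rewrite simq_S size_rcons IH. Qed.

Definition wsk k := map snd (simq k).

Lemma size_wsk k : size (wsk k) = k.
Proof. by rewrite /wsk size_map size_simq. Qed.

Lemma orth_sim k : (k <= T)%N -> orth (simM k).
Proof.
elim: k => [_|k IH hk]; first exact: orth0.
rewrite simM_S; apply: orth_fill; rewrite ?expr1n //.
  by rewrite size_map size_simq.
by apply: IH; lia.
Qed.

Lemma idx_sim k i : row i (simM k) != 0 -> i \in map fst (simq k).
Proof.
elim: k => [|k IH]; first by rewrite /simM /= row0 eqxx.
rewrite simM_S simq_S !map_rcons mem_rcons in_cons row_fillS.
by case: (i =P _) => [->|_] //=.
Qed.

Lemma good_back A k : (k < T)%N -> Good (wsk k.+1) (simM k.+1) A -> Good (wsk k) (simM k) A.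
Proof.
move=> hk; rewrite simM_S; apply: good_fill.
  by move=> w; rewrite /wsk simq_S map_rcons mem_rcons in_cons orbC => ->.
by rewrite size_map size_simq.
Qed.

Lemma good_all A : Good (wsk T) (simM T) A -> forall k, (k <= T)%N -> Good (wsk k) (simM k) A.
Proof.
move=> hT.
suff H : forall j k, (k + j = T)%N -> Good (wsk k) (simM k) A.
  by move=> k hk; apply: (H (T - k)%N); lia.
elim=> [|j IH] k e; first by rewrite addn0 in e; rewrite e.
apply: good_back; first lia.
by apply: IH; lia.
Qed.

Lemma hist_sim A : Good (wsk T) (simM T) A ->
  forall k, (k <= T)%N -> history alg A k = simh k.
Proof.
move=> hG; elim=> [//|k IH hk] /=.
rewrite IH; last lia.
rewrite simh_S; congr rcons.
set q := alg_query alg (simh k).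
have G := good_all hG hk.
have nzl : row q.1 (simM k.+1) != 0.
  rewrite simM_S fill_nz ?eqxx ?oner_eq0 //.
  by rewrite size_map size_simq.
rewrite /oracle1; congr pair; last by have [-> ] := G q.1.
apply/row_matrixP => i; rewrite !row_mul.
case: (row i (simM k.+1) =P 0) => [z|/eqP nz].
  rewrite z mul0mx; apply: (G i).2 => //.
  by rewrite /wsk simq_S map_rcons mem_rcons in_cons eqxx.
by have [->] := G i.
Qed.


Lemma mmT_entry (A : 'M[R]_(n,d)) i j : (A *m A^T) i j = (row i A *m (row j A)^T) 0 0.
Proof. by rewrite !mxE; apply: eq_bigr => k _; rewrite !mxE. Qed.

Lemma claim3 (A : 'M[R]_(n,d)) l wout : (row l A *m wout) 0 0 <= 0 ->
  exists p : 'cV[R]_n, in_simplex p /\ bilin p A wout <= 0.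
Proof.
move=> h; exists (delta_mx l 0); split.
  split => [i|]; first by rewrite mxE ler0n.
  rewrite (bigD1 l) //= big1 ?mxE ?eqxx ?addr0 // => i /negbTE ne.
  by rewrite mxE ne.
by rewrite /bilin trmx_delta -rowE.
Qed.

Lemma numeric (A : 'M[R]_(n,d)) : A *m A^T = 1%:M ->
  max_row_norm A = 1 /\
  (exists w : 'cV[R]_d, cnorm2 w <= 1 /\
       forall p : 'cV[R]_n, in_simplex p ->
         1 / Num.sqrt (n%:R) <= bilin p A w).
Proof.
move=> hA; split.
  have r1 l : rnorm2 (row l A) = 1.
    rewrite /rnorm2 -[X in _ = X]sqrtr1; congr Num.sqrt.
    have e : (row l A *m (row l A)^T) 0 0 = 1 by rewrite -mmT_entry hA mxE eqxx.
    by rewrite -e mxE; apply: eq_bigr => j _; rewrite !mxE expr2.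
  rewrite /max_row_norm (eq_bigr (fun _ => 1)); last by move=> l _; exact: r1.
  rewrite big_ord_recl; apply: max_l.
  elim/big_ind: _ => //.
  by move=> x y hx hy; rewrite ge_max hx hy.
have n0 : (0 : R) < n%:R by rewrite ltr0n.
set c := (Num.sqrt (n%:R : R))^-1.
have c2 : c ^+ 2 = (n%:R)^-1 by rewrite /c exprVn sqr_sqrtr ?ltW.
exists (c *: (A^T *m (const_mx 1 : 'cV[R]_n))); split.
  rewrite /cnorm2.
  have -> : \sum_(j < d) (c *: (A^T *m (const_mx 1 : 'cV[R]_n))) j 0 ^+ 2 =
            ((c *: (A^T *m (const_mx 1 : 'cV[R]_n)))^T *m (c *: (A^T *m (const_mx 1 : 'cV[R]_n)))) 0 0.
    rewrite [RHS]mxE; apply: eq_bigr => j _.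
    by rewrite expr2 [X in _ = X * _]mxE.
  rewrite !linearZ /= -scalemxAl scalerA -expr2 c2.
  rewrite trmx_mul trmxK mulmxA -(mulmxA _ A) hA mulmx1 mxE.
  rewrite mxE (eq_bigr (fun _ => 1)); last by move=> i _; rewrite !mxE mulr1.
  rewrite sumr_const card_ord -[X in _ * X]mulr1n mulVf ?gt_eqF //.
  by rewrite sqrtr1.
move=> p [p0 p1]; rewrite mul1r le_eqVlt; apply/orP; left; apply/eqP.
rewrite /bilin -scalemxAr mulmxA -(mulmxA _ A) hA mulmx1.
rewrite mxE; suff -> : (p^T *m (const_mx 1 : 'cV[R]_n)) 0 0 = 1 by rewrite mulr1.
rewrite mxE -[X in _ = X]p1; apply: eq_bigr => i _; by rewrite !mxE mulr1.
Qed.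


Lemma main_lemma : exists A : 'M[R]_(n, d),
    max_row_norm A = 1 /\
    (exists w : 'cV[R]_d, cnorm2 w <= 1 /\
       forall p : 'cV[R]_n, in_simplex p ->
         1 / Num.sqrt (n%:R) <= bilin p A w) /\
    (exists p : 'cV[R]_n, in_simplex p /\
       bilin p A (run_output alg A T) <= 0).
Proof.
set ws := wsk T; set M := simM T; set wout := alg_output alg (simh T).
have hs : (size ws <= T)%N by rewrite size_wsk.
have [ls hls] : exists ls : 'I_n, row ls M = 0.
  case: (pickP (fun l : 'I_n => l \notin map fst (simq T))) => [l hl|no].
    exists l; case: (row l M =P 0) => // /eqP /idx_sim.
    by rewrite (negbTE hl).
  exfalso.
  have : (#|'I_n| <= #|map fst (simq T)|)%N.
    apply: subset_leq_card; apply/subsetP => l _.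
    by have := no l; move/negbFE.
  have := card_size (map fst (simq T)).
  rewrite card_ord size_map size_simq => a b; have := leq_trans b a; by rewrite ltnn.
set f := fresh ws M.
set s : R := if 0 < (f *m wout) 0 0 then -1 else 1.
have s2 : s ^+ 2 = 1 by rewrite /s; case: ifP; rewrite ?sqrrN expr1n.
have s0 : s != 0 by rewrite /s; case: ifP; rewrite ?oppr_eq0 oner_eq0.
set G0 := fillS s ws M ls.
set A := fillall ws G0 (enum 'I_n).
have oA : orth A.
  apply: (orth_fold _ hs); apply: orth_fill => //; exact: (orth_sim (leqnn T)).
have nzA i : row i A != 0 by apply: fold_nz; rewrite ?mem_enum.
have AA : A *m A^T = 1%:M.
  apply/matrixP => i j; rewrite mmT_entry.
  have [<-|ne] := eqVneq i j.
    by rewrite (oA.2 i (nzA i)) !mxE !eqxx.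
  by rewrite (oA.1 i j ne) !mxE (negbTE ne).
have gA : Good ws M A.
  apply: (@good_fill s ws ws M ls A) => //.
  exact: (good_fold hs (good_refl ws A)).
have hist := hist_sim gA (leqnn T).
have [h1 h2] := numeric AA.
exists A; split => //; split => //.
apply: (@claim3 A ls).
rewrite /run_output hist -/wout.
have nz0 : row ls G0 != 0 by apply: fill_nz; rewrite ?eqxx.
rewrite fold_keep // row_fillS eqxx hls eqxx /= -scalemxAl mxE -/f.
rewrite /s; case: ifP => h.
  by rewrite mulN1r oppr_le0 ltW.
by rewrite mul1r leNgt h.
Qed.

End Main.

Theorem theorem1 (R : realType) (T d : nat) (hT : (1 <= T)%N)
  (hd : (2 * T + 1 < d)%N) (alg : algorithm R T.+1 d) :
  exists A : 'M[R]_(T.+1, d),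
    max_row_norm A = 1 /\
    (exists w : 'cV[R]_d, cnorm2 w <= 1 /\
       forall p : 'cV[R]_T.+1, in_simplex p ->
         1 / Num.sqrt (T.+1)%:R <= bilin p A w) /\
    (exists p : 'cV[R]_T.+1, in_simplex p /\
       bilin p A (run_output alg A T) <= 0).
Proof. exact: (main_lemma hd alg). Qed.
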